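(* Let $d\ge1$ and $k\ge2$ be integers and $\alpha\in[0,1]$. Then \[ \rho(A_\alpha(B(d,k)))\le\alpha(d+1)+2(1-\alpha)\sqrt d\cos\left(\frac{\pi}{k+1}\right) \] and \[ \rho(A_\alpha(B(d,k)))>\alpha(d+1)+2(1-\alpha)\sqrt d\cos\left(\frac{\pi}{k}\right)-\frac{20\alpha\sqrt d}{k^3}. \]
   Context: For a graph $G$, $A(G)$ is the adjacency matrix, $D(G)$ the diagonal degree matrix, and $A_\alpha(G)=\alpha D(G)+(1-\alpha)A(G)$; $\rho(M)$ is the largest eigenvalue of a real symmetric nonnegative matrix $M$. In a rooted tree the level of a vertex is its distance to the root plus one. The Bethe tree $B(d,k)$ is the rooted tree with $k$ levels in which the root has degree $d$, every vertex at level $j$ with $2\le j\le k-1$ has degree $d+1$, and every vertex at level $k$ has degree $1$. *)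

(* Defs.v *)
From Stdlib Require Import Reals List Arith.
Import ListNotations.
Open Scope R_scope.

Definition sumL {T : Type} (l : list T) (f : T -> R) : R :=
  fold_right (fun a s => f a + s) 0 l.

(* A graph with vertex type T (decidable equality) is given by a
   duplicate-free vertex list V and a 0/1-valued symmetric adjacency
   function A : T -> T -> R; matrices indexed by V are functions T -> T -> R. *)

Section Gen.
Context {T : Type} (eqT : forall x y : T, {x = y} + {x <> y}).

Definition degree (V : list T) (A : T -> T -> R) (u : T) : R :=
  sumL V (fun v => A u v).

Definition degMatrix (V : list T) (A : T -> T -> R) : T -> T -> R :=
  fun u v => if eqT u v then degree V A u else 0.

Definition A_alpha (V : list T) (A : T -> T -> R) (alpha : R) : T -> T -> R :=
  fun u v => alpha * degMatrix V A u v + (1 - alpha) * A u v.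

Definition is_eigenvalue (V : list T) (M : T -> T -> R) (lambda : R) : Prop :=
  exists x : T -> R,
    (exists u, In u V /\ x u <> 0) /\
    forall u, In u V -> sumL V (fun v => M u v * x v) = lambda * x u.

Definition is_largest_eigenvalue (V : list T) (M : T -> T -> R) (r : R) : Prop :=
  is_eigenvalue V M r /\ forall l, is_eigenvalue V M l -> l <= r.
End Gen.

(* Vertices are words over the alphabet {0,...,d-1}; the root is the empty
   word (level 1), and the children of w are w ++ [i], i < d.  A word of
   length j-1 lies at level j; B(d,k) consists of all words of length <= k-1.
   Hence the root has degree d, vertices at levels 2..k-1 have degree d+1,
   and vertices at level k have degree 1. *)

Fixpoint words (d n : nat) : list (list nat) :=
  match n with
  | O => [ [] ]
  | S n' => flat_map (fun w => map (fun i => w ++ [i]) (seq 0 d)) (words d n')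
  end.

Definition bethe_vertices (d k : nat) : list (list nat) :=
  flat_map (words d) (seq 0 k).

Definition is_child (u v : list nat) : bool :=
  andb (Nat.eqb (length v) (S (length u)))
  (if list_eq_dec Nat.eq_dec (firstn (length u) v) u then true else false).

Definition bethe_adj (u v : list nat) : R :=
  if orb (is_child u v) (is_child v u) then 1 else 0.

Definition bethe_A_alpha (d k : nat) (alpha : R) : list nat -> list nat -> R :=
  A_alpha (list_eq_dec Nat.eq_dec) (bethe_vertices d k) bethe_adj alpha.

(* Main.v *)
Require Import Defs.
From Stdlib Require Import Reals List Arith Lra Lia Classical.
Import ListNotations.
Open Scope R_scope.

Lemma sumL_nil {T} (f : T -> R) : sumL [] f = 0.
Proof. reflexivity. Qed.
Lemma sumL_cons {T} a l (f : T -> R) : sumL (a :: l) f = f a + sumL l f.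
Proof. reflexivity. Qed.
Lemma sumL_app {T} l1 l2 (f : T -> R) : sumL (l1 ++ l2) f = sumL l1 f + sumL l2 f.
Proof. induction l1; simpl; [lra|]. unfold sumL in *; simpl. rewrite IHl1. lra. Qed.
Lemma sumL_ext {T} l (f g : T -> R) : (forall x, In x l -> f x = g x) -> sumL l f = sumL l g.
Proof. induction l; intros H; simpl; auto. unfold sumL; simpl. fold (sumL l f) (sumL l g).
  rewrite H by (left; auto). rewrite IHl; auto. intros; apply H; right; auto. Qed.
Lemma sumL_plus {T} l (f g : T -> R) : sumL l (fun x => f x + g x) = sumL l f + sumL l g.
Proof. induction l; unfold sumL in *; simpl; [lra|]. rewrite IHl. lra. Qed.
Lemma sumL_scal {T} l (f : T -> R) c : sumL l (fun x => c * f x) = c * sumL l f.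
Proof. induction l; unfold sumL in *; simpl; [lra|]. rewrite IHl. lra. Qed.
Lemma sumL_zero {T} l (f : T -> R) : (forall x, In x l -> f x = 0) -> sumL l f = 0.
Proof. intros H. transitivity (sumL l (fun _ => 0)). apply sumL_ext; auto.
  induction l; unfold sumL in *; simpl; auto. rewrite IHl; auto. lra. intros; apply H; right; auto. Qed.
Lemma sumL_le {T} l (f g : T -> R) : (forall x, In x l -> f x <= g x) -> sumL l f <= sumL l g.
Proof. induction l; intros H; unfold sumL in *; simpl; [lra|].
  fold (sumL l f) (sumL l g) in *. assert (f a <= g a) by (apply H; left; auto).
  assert (sumL l f <= sumL l g) by (apply IHl; intros; apply H; right; auto). lra. Qed.
Lemma sumL_lt {T} l (f g : T -> R) a : In a l -> f a < g a ->
  (forall x, In x l -> f x <= g x) -> sumL l f < sumL l g.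
Proof. induction l; intros Ha Hlt H; simpl in Ha; [contradiction|].
  unfold sumL; simpl; fold (sumL l f) (sumL l g).
  destruct Ha as [<-|Ha].
  - assert (sumL l f <= sumL l g) by (apply sumL_le; intros; apply H; right; auto). lra.
  - assert (f a0 <= g a0) by (apply H; left; auto).
    assert (sumL l f < sumL l g) by (apply IHl; auto; intros; apply H; right; auto). lra. Qed.
Lemma sumL_nonneg {T} l (f : T -> R) : (forall x, In x l -> 0 <= f x) -> 0 <= sumL l f.
Proof. intros H. replace 0 with (sumL l (fun _ => 0)). apply sumL_le; auto.
  apply sumL_zero; auto. Qed.
Lemma sumL_abs {T} l (f : T -> R) : Rabs (sumL l f) <= sumL l (fun x => Rabs (f x)).
Proof. induction l; unfold sumL in *; simpl. rewrite Rabs_R0; lra.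
  eapply Rle_trans. apply Rabs_triang. lra. Qed.
Lemma sumL_map {T U} (h : T -> U) l (f : U -> R) : sumL (map h l) f = sumL l (fun x => f (h x)).
Proof. induction l; unfold sumL in *; simpl; auto. rewrite IHl; auto. Qed.
Lemma sumL_flat_map {T U} (g : T -> list U) l (f : U -> R) :
  sumL (flat_map g l) f = sumL l (fun a => sumL (g a) f).
Proof. induction l; simpl; auto. rewrite sumL_app, IHl. reflexivity. Qed.

Lemma sumL_ind {T} (eqT : forall x y : T, {x = y} + {x <> y}) l a c :
  NoDup l -> In a l -> sumL l (fun x => if eqT x a then c else 0) = c.
Proof. induction l; intros Hn Ha; simpl in Ha; [contradiction|].
  inversion Hn; subst. unfold sumL; simpl; fold (sumL l (fun x => if eqT x a then c else 0)).
  destruct (eqT a0 a).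
  - subst. rewrite sumL_zero. lra. intros x Hx. destruct (eqT x a); subst; auto. contradiction.
  - destruct Ha as [Ha|Ha]; [congruence|]. rewrite IHl; auto. lra. Qed.

Lemma sumL_ind0 {T} (eqT : forall x y : T, {x = y} + {x <> y}) l a c :
  ~ In a l -> sumL l (fun x => if eqT x a then c else 0) = 0.
Proof. intros H; apply sumL_zero; intros x Hx. destruct (eqT x a); subst; auto. contradiction. Qed.

Lemma exists_max {T} (l : list T) (F : T -> R) : l <> [] ->
  exists m, In m l /\ forall v, In v l -> F v <= F m.
Proof. induction l as [|a0 l IHl]; intros Ha; [congruence|]. destruct l as [|b l'].
  - exists a0. split; [left; auto|]. intros v [<-|[]]; lra.
  - destruct (IHl ltac:(discriminate)) as [m [Hm Hmax]].
    destruct (Rle_dec (F a0) (F m)).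
    + exists m. split; [right; auto|]. intros v [<-|Hv]; auto.
    + exists a0. split; [left; auto|]. intros v [<-|Hv]; [lra|]. specialize (Hmax v Hv); lra. Qed.

Lemma collatz {T} (V : list T) (M : T -> T -> R) (z : T -> R) C l :
 (forall u v, In u V -> In v V -> 0 <= M u v) ->
 (forall u, In u V -> 0 < z u) ->
 (forall u, In u V -> sumL V (fun v => M u v * z v) <= C * z u) ->
 is_eigenvalue V M l -> l <= C.
Proof.
  intros HM Hz HC [y [[u0 [Hu0 Hy0]] Heig]].
  assert (HV : V <> []) by (intro E; subst; contradiction).
  destruct (exists_max V (fun v => Rabs (y v) / z v) HV) as [m [Hm Hmax]].
  set (t := Rabs (y m) / z m).
  assert (Hzm := Hz m Hm).
  assert (Ht : 0 < t).
  { apply Rlt_le_trans with (Rabs (y u0) / z u0); [|apply Hmax; auto].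
    apply Rdiv_lt_0_compat; [apply Rabs_pos_lt; auto| apply Hz; auto]. }
  assert (Hb : forall v, In v V -> Rabs (y v) <= t * z v).
  { intros v Hv. specialize (Hmax v Hv). specialize (Hz v Hv).
    apply (Rmult_le_compat_r (z v)) in Hmax; [|lra].
    replace (Rabs (y v) / z v * z v) with (Rabs (y v)) in Hmax by (field; lra).
    fold t in Hmax. lra. }
  assert (Hym : Rabs (y m) = t * z m).
  { unfold t. field. lra. }
  assert (H1 : Rabs l * Rabs (y m) <= t * (C * z m)).
  { rewrite <- Rabs_mult, <- Heig by auto.
    eapply Rle_trans. apply sumL_abs.
    eapply Rle_trans with (sumL V (fun v => t * (M m v * z v))).
    apply sumL_le. intros v Hv. rewrite Rabs_mult, Rabs_pos_eq by (apply HM; auto).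
    specialize (Hb v Hv). specialize (HM m v Hm Hv). nra.
    rewrite sumL_scal. apply Rmult_le_compat_l; [lra|]. apply HC; auto. }
  rewrite Hym in H1.
  assert (Rabs l <= C).
  { assert (0 < t * z m) by (apply Rmult_lt_0_compat; auto). nra. }
  pose proof (Rle_abs l). lra.
Qed.

Definition letters (d : nat) (w : list nat) := Forall (fun i => (i < d)%nat) w.

Lemma words_iff d n w : In w (words d n) <-> length w = n /\ letters d w.
Proof.
  revert w; induction n; intros w; simpl.
  - split. intros [<-|[]]. split; auto. constructor.
    intros [H _]. destruct w; simpl in H; [left; auto|discriminate].
  - rewrite in_flat_map. split.
    + intros [w' [Hw' Hin]]. apply in_map_iff in Hin. destruct Hin as [i [<- Hi]].
      apply in_seq in Hi. apply IHn in Hw'. destruct Hw' as [Hl Hlet].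
      rewrite length_app; simpl. split; [lia|]. unfold letters. apply Forall_app. split; auto. constructor; [lia|constructor].
    + intros [Hl Hlet]. destruct w as [|x w0] using rev_ind; [simpl in Hl; discriminate|].
      clear IHw0. rewrite length_app in Hl; simpl in Hl.
      unfold letters in Hlet; apply Forall_app in Hlet. destruct Hlet as [H1 H2].
      exists w0. split. apply IHn; split; auto; lia.
      apply in_map_iff. exists x. split; auto. apply in_seq. inversion H2; lia.
Qed.

Lemma NoDup_flat_map {A B} (g : A -> list B) l :
  NoDup l -> (forall a, NoDup (g a)) ->
  (forall a b x, In a l -> In b l -> In x (g a) -> In x (g b) -> a = b) ->
  NoDup (flat_map g l).
Proof.
  induction l; intros Hl Hg Hdis; simpl; [constructor|].
  inversion Hl; subst. apply NoDup_app; auto.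
  - apply IHl; auto. intros; eapply Hdis; eauto; right; auto.
  - intros x Hx Hx'. apply in_flat_map in Hx'. destruct Hx' as [b [Hb Hxb]].
    assert (a = b) by (eapply Hdis; eauto; [left|right]; auto). subst. contradiction.
Qed.

Lemma words_NoDup d n : NoDup (words d n).
Proof.
  induction n; simpl. repeat constructor; auto.
  apply NoDup_flat_map; auto.
  - intros w. apply NoDup_map_NoDup_ForallPairs; [|apply seq_NoDup].
    intros i j _ _ H. apply app_inj_tail in H. tauto.
  - intros a b x _ _ Ha Hb. apply in_map_iff in Ha, Hb.
    destruct Ha as [i [<- _]]. destruct Hb as [j [E _]]. apply app_inj_tail in E. symmetry; tauto.
Qed.

Lemma V_iff d k w : In w (bethe_vertices d k) <-> (length w < k)%nat /\ letters d w.
Proof.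
  unfold bethe_vertices. rewrite in_flat_map. split.
  - intros [n [Hn Hw]]. apply in_seq in Hn. apply words_iff in Hw. destruct Hw; split; auto; lia.
  - intros [Hl Hlet]. exists (length w). split. apply in_seq; lia. apply words_iff; auto.
Qed.

Lemma V_NoDup d k : NoDup (bethe_vertices d k).
Proof.
  apply NoDup_flat_map. apply seq_NoDup. apply words_NoDup.
  intros a b x _ _ Ha Hb. apply words_iff in Ha, Hb. lia.
Qed.

Lemma is_child_iff u v : is_child u v = true <-> exists i, v = u ++ [i].
Proof.
  unfold is_child. rewrite Bool.andb_true_iff, Nat.eqb_eq. split.
  - intros [Hl He]. destruct (list_eq_dec Nat.eq_dec (firstn (length u) v) u) as [E|]; [|discriminate].
    rewrite <- (firstn_skipn (length u) v). rewrite E.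
    assert (Hs : length (skipn (length u) v) = 1%nat) by (rewrite length_skipn; lia).
    destruct (skipn (length u) v) as [|i [|]]; simpl in Hs; try discriminate. exists i; auto.
  - intros [i ->]. rewrite length_app; simpl. split; [lia|].
    replace (length u) with (length u + 0)%nat by lia. rewrite firstn_app_2. simpl. rewrite app_nil_r.
    destruct (list_eq_dec Nat.eq_dec u u); auto.
Qed.

Notation leq := (list_eq_dec Nat.eq_dec).

Definition par (u v : list nat) : R :=
  if leq u [] then 0 else if leq v (removelast u) then 1 else 0.

Lemma sum_child_ind d u v :
  sumL (seq 0 d) (fun i => if leq v (u ++ [i]) then 1 else 0) =
  if is_child u v then 1 else 0.
Proof.
  destruct (is_child u v) eqn:E.
Abort.

Lemma sum_child_yes d u i0 : (i0 < d)%nat ->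
  sumL (seq 0 d) (fun i => if leq (u ++ [i0]) (u ++ [i]) then 1 else 0) = 1.
Proof.
  intros H. transitivity (sumL (seq 0 d) (fun x => if Nat.eq_dec x i0 then 1 else 0)).
  2:{ apply sumL_ind; [apply seq_NoDup | apply in_seq; lia]. }
  apply sumL_ext; intros i _. destruct (leq (u ++ [i0]) (u ++ [i])) as [E|E];
  destruct (Nat.eq_dec i i0); auto.
  - apply app_inj_tail in E; destruct E; congruence.
  - subst; congruence.
Qed.

Lemma sum_child_no d u v : (forall i, v <> u ++ [i]) ->
  sumL (seq 0 d) (fun i => if leq v (u ++ [i]) then 1 else 0) = 0.
Proof.
  intros H. apply sumL_zero; intros i _. destruct (leq v (u ++ [i])); auto. exfalso; eapply H; eauto.
Qed.

Lemma len_removelast (u : list nat) : length (removelast u) = pred (length u).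
Proof.
  destruct u as [|a u']; auto.
  rewrite (app_removelast_last 0%nat (l := a :: u')) at 2 by discriminate.
  rewrite length_app; simpl; lia.
Qed.

Lemma adj_decomp d u v : letters d v ->
  bethe_adj u v = sumL (seq 0 d) (fun i => if leq v (u ++ [i]) then 1 else 0) + par u v.
Proof.
  intros Hv. unfold bethe_adj, par.
  destruct (is_child u v) eqn:E1.
  - apply is_child_iff in E1. destruct E1 as [i0 ->]. simpl.
    rewrite sum_child_yes. destruct (leq u []); [lra|].
    destruct (leq (u ++ [i0]) (removelast u)) as [E|]; [|lra].
    apply (f_equal (@length nat)) in E. rewrite len_removelast, length_app in E. simpl in E. lia.
    unfold letters in Hv. apply Forall_app in Hv. destruct Hv as [_ Hv]. inversion Hv; auto.
  - destruct (is_child v u) eqn:E2; simpl.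
    + apply is_child_iff in E2. destruct E2 as [i0 ->].
      rewrite sum_child_no.
      destruct (leq (v ++ [i0]) []) as [E|]. destruct v; discriminate.
      rewrite removelast_last. destruct (leq v v); [lra|congruence].
      intros i E. apply (f_equal (@length nat)) in E. rewrite !length_app in E. simpl in E. lia.
    + rewrite sum_child_no.
      destruct (leq u []); [lra|]. destruct (leq v (removelast u)) as [E|]; [|lra].
      exfalso. assert (is_child v u = true); [|congruence].
      apply is_child_iff. exists (last u 0%nat). subst. apply app_removelast_last; auto.
      intros i E. assert (is_child u v = true); [|congruence]. apply is_child_iff. eauto.
Qed.

Lemma sumL_swap {A B} (l1 : list A) (l2 : list B) F :
  sumL l1 (fun a => sumL l2 (fun b => F a b)) = sumL l2 (fun b => sumL l1 (fun a => F a b)).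
Proof.
  induction l1; simpl. rewrite sumL_zero; auto.
  change (sumL (a :: l1) (fun a => sumL l2 (fun b => F a b))) with
    (sumL l2 (fun b => F a b) + sumL l1 (fun a => sumL l2 (fun b => F a b))).
  rewrite IHl1. rewrite <- sumL_plus. apply sumL_ext; intros; reflexivity.
Qed.

Lemma sumL_mult_r {T} l (f : T -> R) c : sumL l (fun x => f x * c) = sumL l f * c.
Proof. rewrite Rmult_comm, <- sumL_scal. apply sumL_ext; intros; lra. Qed.

Lemma sumL_const {T} (l : list T) c : sumL l (fun _ => c) = INR (length l) * c.
Proof. induction l; unfold sumL in *; simpl. lra. rewrite IHl. destruct (length l); simpl; lra. Qed.

Lemma ind_in {T} (eqT : forall x y : T, {x = y} + {x <> y}) l a G : NoDup l -> In a l ->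
  sumL l (fun v => (if eqT v a then 1 else 0) * G v) = G a.
Proof.
  intros. transitivity (sumL l (fun x => if eqT x a then G a else 0)).
  2: apply sumL_ind; auto. apply sumL_ext; intros v _.
  destruct (eqT v a); subst; lra.
Qed.

Lemma ind_notin {T} (eqT : forall x y : T, {x = y} + {x <> y}) l a G : ~ In a l ->
  sumL l (fun v => (if eqT v a then 1 else 0) * G v) = 0.
Proof.
  intros. apply sumL_zero. intros v Hv. destruct (eqT v a); subst; [contradiction|lra].
Qed.

Lemma adj_sum d k u (g : nat -> R) : In u (bethe_vertices d k) ->
  sumL (bethe_vertices d k) (fun v => bethe_adj u v * g (length v)) =
  (if Nat.eq_dec (length u) 0 then 0 else g (pred (length u)))
  + (if lt_dec (S (length u)) k then INR d * g (S (length u)) else 0).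
Proof.
  intros Hu. pose proof (V_NoDup d k) as HN. apply V_iff in Hu as Hu'. destruct Hu' as [Hlu Hletu].
  rewrite (sumL_ext _ _ (fun v => sumL (seq 0 d) (fun i => (if leq v (u ++ [i]) then 1 else 0) * g (length v)) + par u v * g (length v))).
  2:{ intros v Hv. apply V_iff in Hv. rewrite (adj_decomp d u v) by tauto.
      rewrite Rmult_plus_distr_r, sumL_mult_r. reflexivity. }
  rewrite sumL_plus, sumL_swap. rewrite Rplus_comm. f_equal.
  - unfold par. destruct (leq u []) as [E|E]; destruct (Nat.eq_dec (length u) 0) as [E'|E'].
    + apply sumL_zero; intros; lra.
    + subst; simpl in E'; congruence.
    + destruct u; simpl in E'; congruence.
    + rewrite ind_in; auto. rewrite len_removelast; auto.
      apply V_iff. rewrite len_removelast. split; [lia|].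
      rewrite (app_removelast_last 0%nat E) in Hletu. unfold letters in *. apply Forall_app in Hletu; tauto.
  - destruct (lt_dec (S (length u)) k).
    + rewrite (sumL_ext _ _ (fun _ => g (S (length u)))).
      rewrite sumL_const, length_seq; auto.
      intros i Hi. rewrite ind_in; auto. rewrite length_app; simpl. f_equal; lia.
      apply V_iff. rewrite length_app; simpl. split; [lia|]. unfold letters; apply Forall_app; split; auto.
      constructor; [apply in_seq in Hi; lia|constructor].
    + apply sumL_zero. intros i _. apply ind_notin. intros Hin. apply V_iff in Hin.
      rewrite length_app in Hin; simpl in Hin. lia.
Qed.

Definition degR (d k j : nat) : R :=
  (if Nat.eq_dec j 0 then 0 else 1) + (if lt_dec (S j) k then INR d else 0).

Lemma degree_eq d k u : In u (bethe_vertices d k) ->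
  degree (bethe_vertices d k) bethe_adj u = degR d k (length u).
Proof.
  intros Hu. unfold degree. rewrite (sumL_ext _ _ (fun v => bethe_adj u v * (fun _ => 1) (length v))).
  2:{ intros; lra. }
  pose proof (adj_sum d k u (fun _ => 1) Hu) as H. cbv beta in H. rewrite H. unfold degR.
  destruct (Nat.eq_dec (length u) 0); destruct (lt_dec (S (length u)) k); lra.
Qed.

Lemma adj_nonneg u v : 0 <= bethe_adj u v.
Proof. unfold bethe_adj. destruct (is_child u v || is_child v u)%bool; lra. Qed.

Lemma M_nonneg d k alpha u v : 0 <= alpha <= 1 -> 0 <= bethe_A_alpha d k alpha u v.
Proof.
  intros Ha. unfold bethe_A_alpha, A_alpha, degMatrix.
  pose proof (adj_nonneg u v).
  assert (0 <= degree (bethe_vertices d k) bethe_adj u).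
  { apply sumL_nonneg. intros; apply adj_nonneg. }
  destruct (list_eq_dec Nat.eq_dec u v); nra.
Qed.

Lemma M_sum d k alpha u (g : nat -> R) : In u (bethe_vertices d k) ->
  sumL (bethe_vertices d k) (fun v => bethe_A_alpha d k alpha u v * g (length v)) =
  alpha * degR d k (length u) * g (length u) + (1 - alpha) *
  ((if Nat.eq_dec (length u) 0 then 0 else g (pred (length u)))
  + (if lt_dec (S (length u)) k then INR d * g (S (length u)) else 0)).
Proof.
  intros Hu. unfold bethe_A_alpha, A_alpha, degMatrix.
  rewrite (sumL_ext _ _ (fun v => alpha * ((if list_eq_dec Nat.eq_dec v u then 1 else 0) *
     (degree (bethe_vertices d k) bethe_adj u * g (length v))) + (1 - alpha) * (bethe_adj u v * g (length v)))).
  2:{ intros v _. destruct (list_eq_dec Nat.eq_dec u v); destruct (list_eq_dec Nat.eq_dec v u); subst; try congruence; lra. }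
  rewrite sumL_plus, !sumL_scal, adj_sum by auto.
  rewrite (ind_in (list_eq_dec Nat.eq_dec) _ u (fun v => degree (bethe_vertices d k) bethe_adj u * g (length v))).
  2: apply V_NoDup. 2: auto.
  rewrite degree_eq by auto. lra.
Qed.

Lemma cont_pos (f : R -> R) z : continuity_pt f z -> 0 < f z ->
  exists del, 0 < del /\ forall y, Rabs (y - z) < del -> 0 < f y.
Proof.
  intros Hc Hp. destruct (Hc (f z) Hp) as [del [Hd H]].
  exists del. split; auto. intros y Hy.
  destruct (Req_dec y z) as [->|Hne]; auto.
  assert (Hd2 : R_dist (f y) (f z) < f z).
  { apply H. split. split; [exact I| auto]. unfold R_dist. simpl. auto. }
  unfold R_dist in Hd2. apply Rabs_def2 in Hd2. lra.
Qed.
Lemma cont_neg (f : R -> R) z : continuity_pt f z -> f z < 0 ->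
  exists del, 0 < del /\ forall y, Rabs (y - z) < del -> f y < 0.
Proof.
  intros Hc Hp. destruct (cont_pos (fun x => - f x) z) as [del [Hd H]].
  apply continuity_pt_opp; auto. lra.
  exists del; split; auto. intros y Hy; specialize (H y Hy). simpl in H. lra.
Qed.

Definition Aj d k alpha j := alpha * degR d k j.

Fixpoint fp d k alpha lam n : R * R :=
  match n with
  | O => (0, 1)
  | S n => let p := fp d k alpha lam n in
     (snd p, ((lam - Aj d k alpha n) * snd p - (1 - alpha) * fst p) / ((1 - alpha) * INR d))
  end.

Definition ff d k alpha lam n := snd (fp d k alpha lam n).

Lemma fp_cont d k alpha n :
  continuity (fun lam => fst (fp d k alpha lam n)) /\ continuity (fun lam => snd (fp d k alpha lam n)).
Proof.
  induction n; simpl.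
  - split; apply continuity_const; intros x y; reflexivity.
  - destruct IHn as [H1 H2]. split; auto.
    apply (continuity_mult (fun lam => (lam - Aj d k alpha n) * snd (fp d k alpha lam n) - (1 - alpha) * fst (fp d k alpha lam n)) (fun _ => / ((1 - alpha) * INR d))).
    + apply (continuity_minus (fun lam => (lam - Aj d k alpha n) * snd (fp d k alpha lam n)) (fun lam => (1 - alpha) * fst (fp d k alpha lam n))).
      * apply (continuity_mult (fun lam => lam - Aj d k alpha n) (fun lam => snd (fp d k alpha lam n))); auto.
        apply (continuity_minus (fun lam => lam) (fun _ => Aj d k alpha n)). apply derivable_continuous, derivable_id.
        apply continuity_const; intros x y; reflexivity.
      * apply (continuity_scal (fun lam => fst (fp d k alpha lam n))); auto.
    + apply continuity_const; intros x y; reflexivity.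
Qed.

Lemma degR_bounds d k j : 0 <= degR d k j <= INR d + 1.
Proof.
  unfold degR. pose proof (pos_INR d). destruct (Nat.eq_dec j 0); destruct (lt_dec (S j) k); lra.
Qed.

Lemma fp_large d k alpha lam : (1 <= d)%nat -> 0 <= alpha < 1 ->
  alpha * (INR d + 1) + (1 - alpha) * (INR d + 1) <= lam ->
  forall n, 0 <= fst (fp d k alpha lam n) <= snd (fp d k alpha lam n) /\ 0 < snd (fp d k alpha lam n).
Proof.
  intros Hd Ha Hl n. assert (HD : 1 <= INR d) by (apply (le_INR 1); auto).
  induction n; simpl; [lra|].
  destruct IHn as [[H1 H2] H3]. set (s := snd (fp d k alpha lam n)) in *.
  set (f0 := fst (fp d k alpha lam n)) in *.
  pose proof (degR_bounds d k n). unfold Aj.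
  assert (Hc : 0 < (1 - alpha) * INR d) by nra.
  assert (s <= ((lam - alpha * degR d k n) * s - (1 - alpha) * f0) / ((1 - alpha) * INR d)).
  { apply Rmult_le_reg_r with ((1 - alpha) * INR d); auto.
    unfold Rdiv; rewrite Rmult_assoc, Rinv_l, Rmult_1_r by lra.
    assert (alpha * degR d k n <= alpha * (INR d + 1)) by nra. nra. }
  lra.
Qed.

Lemma common_delta (F : nat -> R -> R) z m :
  (forall j, continuity (F j)) -> (forall j, (j < m)%nat -> 0 < F j z) ->
  exists del, 0 < del /\ forall y, Rabs (y - z) < del -> forall j, (j < m)%nat -> 0 < F j y.
Proof.
  intros Hc. induction m; intros Hp.
  - exists 1; split; [lra|]. intros; lia.
  - destruct IHm as [d1 [Hd1 H1]]. intros; apply Hp; lia.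
    destruct (cont_pos (F m) z (Hc m z)) as [d2 [Hd2 H2]]. apply Hp; lia.
    exists (Rmin d1 d2). split. apply Rmin_glb_lt; auto.
    intros y Hy j Hj. assert (Rabs (y - z) < d1) by (eapply Rlt_le_trans; [apply Hy| apply Rmin_l]).
    assert (Rabs (y - z) < d2) by (eapply Rlt_le_trans; [apply Hy| apply Rmin_r]).
    destruct (Nat.eq_dec j m); [subst; auto|]. apply H1; auto; lia.
Qed.

Lemma perron d k alpha : (1 <= d)%nat -> (2 <= k)%nat -> 0 <= alpha < 1 ->
  exists lam, (forall j, (j < k)%nat -> 0 < ff d k alpha lam j) /\ ff d k alpha lam k = 0.
Proof.
  intros Hd Hk Ha. assert (HD : 1 <= INR d) by (apply (le_INR 1); auto).
  assert (Hc : 0 < (1 - alpha) * INR d) by nra.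
  set (Lam0 := alpha * (INR d + 1) + (1 - alpha) * (INR d + 1)).
  set (E := fun lam => exists j, (j <= k)%nat /\ ff d k alpha lam j <= 0).
  assert (HE : exists x, E x).
  { exists (Aj d k alpha 0). exists 1%nat. split; [lia|]. unfold ff; simpl.
    replace ((Aj d k alpha 0 - Aj d k alpha 0) * 1 - (1 - alpha) * 0) with 0 by ring.
    unfold Rdiv; rewrite Rmult_0_l; lra. }
  assert (HB : bound E).
  { exists Lam0. intros x [j [_ Hj]]. destruct (Rle_dec x Lam0); auto.
    destruct (fp_large d k alpha x Hd Ha ltac:(unfold Lam0 in *; lra) j) as [_ Hp].
    unfold ff in Hj. lra. }
  destruct (completeness E HB HE) as [z [Hub Hlub]].
  assert (Hcont : forall j, continuity (fun lam => ff d k alpha lam j)).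
  { intros j. apply (fp_cont d k alpha j). }
  assert (P1 : forall y, z < y -> forall j, (j <= k)%nat -> 0 < ff d k alpha y j).
  { intros y Hy j Hj. destruct (Rlt_dec 0 (ff d k alpha y j)); auto.
    assert (E y) by (exists j; split; auto; lra). specialize (Hub y H). lra. }
  assert (P2 : forall j, (j <= k)%nat -> 0 <= ff d k alpha z j).
  { intros j Hj. destruct (Rle_dec 0 (ff d k alpha z j)); auto.
    destruct (cont_neg (fun lam => ff d k alpha lam j) z (Hcont j z)) as [del [Hdel H]]. lra.
    specialize (H (z + del / 2)). assert (ff d k alpha (z + del/2) j < 0).
    apply H. rewrite Rabs_right; lra.
    specialize (P1 (z + del/2) ltac:(lra) j Hj). lra. }
  assert (P3 : exists j, (j <= k)%nat /\ ff d k alpha z j <= 0).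
  { destruct (classic (exists j, (j <= k)%nat /\ ff d k alpha z j <= 0)) as [H|H]. exact H. exfalso.
    destruct (common_delta (fun j lam => ff d k alpha lam j) z (S k) Hcont) as [del [Hdel H2]].
    { intros j Hj. destruct (Rlt_dec 0 (ff d k alpha z j)); auto. exfalso. apply H.
      exists j; split; [lia|lra]. }
    assert (is_upper_bound E (z - del / 2)).
    { intros x [j [Hj Hx]]. specialize (Hub x (ex_intro _ j (conj Hj Hx))).
      destruct (Rle_dec x (z - del/2)); auto. exfalso.
      assert (0 < ff d k alpha x j). apply H2; [rewrite Rabs_left1; lra| lia]. lra. }
    specialize (Hlub _ H0). lra. }
  assert (P4 : forall j, (j < k)%nat -> ff d k alpha z j <> 0).
  { induction j; intros Hj Hz.
    - unfold ff in Hz; simpl in Hz; lra.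
    - assert (H2 := P2 (S (S j)) ltac:(lia)). assert (H0 := P2 j ltac:(lia)).
      unfold ff in H2; simpl in H2. fold (ff d k alpha z j) in H2.
      change (snd (fp d k alpha z (S j))) with (ff d k alpha z (S j)) in H2.
      simpl in Hz. fold (ff d k alpha z j) in Hz. unfold ff in H2, Hz; simpl in H2, Hz.
      rewrite Hz in H2. unfold ff in H0, IHj.
      set (s := snd (fp d k alpha z j)) in *.
      replace (((z - Aj d k alpha (S j)) * 0 - (1 - alpha) * s) / ((1 - alpha) * INR d))
        with (- s / INR d) in H2 by (field; lra).
      assert (s <= 0).
      { destruct (Rle_dec s 0); auto. exfalso.
        assert (0 < s / INR d) by (apply Rdiv_lt_0_compat; lra).
        unfold Rdiv in *. lra. }
      apply IHj; [lia|lra]. }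
  destruct P3 as [j [Hj Hzj]]. exists z. split.
  - intros i Hi. pose proof (P2 i ltac:(lia)). pose proof (P4 i Hi). lra.
  - destruct (Nat.eq_dec j k) as [->|Hne].
    + pose proof (P2 k ltac:(lia)). lra.
    + pose proof (P2 j Hj). exfalso. apply (P4 j); [lia|lra].
Qed.

Lemma rec_rel d k alpha lam j : (1 <= d)%nat -> 0 <= alpha < 1 ->
  Aj d k alpha j * ff d k alpha lam j + (1 - alpha) * fst (fp d k alpha lam j)
  + (1 - alpha) * INR d * ff d k alpha lam (S j) = lam * ff d k alpha lam j.
Proof.
  intros Hd Ha. assert (HD : 1 <= INR d) by (apply (le_INR 1); auto).
  unfold ff; simpl. field. split; [lra|]. nra.
Qed.

Lemma eigen_tree d k alpha lam : (1 <= d)%nat -> 0 <= alpha < 1 ->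
  ff d k alpha lam k = 0 ->
  forall u, In u (bethe_vertices d k) ->
  sumL (bethe_vertices d k) (fun v => bethe_A_alpha d k alpha u v * ff d k alpha lam (length v))
  = lam * ff d k alpha lam (length u).
Proof.
  intros Hd Ha Hk u Hu. rewrite M_sum by auto.
  apply V_iff in Hu. destruct Hu as [Hlu _].
  rewrite <- (rec_rel d k alpha lam (length u)) by auto. unfold Aj.
  assert (E1 : (if Nat.eq_dec (length u) 0 then 0 else ff d k alpha lam (pred (length u)))
     = fst (fp d k alpha lam (length u))).
  { destruct (length u); simpl; auto. }
  assert (E2 : (if lt_dec (S (length u)) k then INR d * ff d k alpha lam (S (length u)) else 0)
     = INR d * ff d k alpha lam (S (length u))).
  { destruct (lt_dec (S (length u)) k); auto. replace (S (length u)) with k by lia. rewrite Hk; ring. }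
  rewrite E1, E2. ring.
Qed.

Lemma root_in d k : (1 <= k)%nat -> In [] (bethe_vertices d k).
Proof. intros. apply V_iff. split. simpl; lia. constructor. Qed.

Lemma largest_tree d k alpha lam : (1 <= d)%nat -> (2 <= k)%nat -> 0 <= alpha < 1 ->
  (forall j, (j < k)%nat -> 0 < ff d k alpha lam j) -> ff d k alpha lam k = 0 ->
  is_largest_eigenvalue (bethe_vertices d k) (bethe_A_alpha d k alpha) lam.
Proof.
  intros Hd Hk Ha Hpos Hz. split.
  - exists (fun v => ff d k alpha lam (length v)). split.
    + exists []. split. apply root_in; lia. unfold ff; simpl; lra.
    + apply eigen_tree; auto.
  - intros l Hl. apply (collatz (bethe_vertices d k) (bethe_A_alpha d k alpha) (fun v : list nat => ff d k alpha lam (length v)) lam l); auto.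
    + intros; apply M_nonneg; lra.
    + intros u Hu. apply Hpos. apply V_iff in Hu; tauto.
    + intros u Hu. rewrite eigen_tree; auto. lra.
Qed.

Lemma sin_sum_id a t : sin (a - t) + sin (a + t) = 2 * cos t * sin a.
Proof. rewrite sin_minus, sin_plus. ring. Qed.

Lemma upper_tree d k alpha l : (1 <= d)%nat -> (2 <= k)%nat -> 0 <= alpha <= 1 ->
  is_eigenvalue (bethe_vertices d k) (bethe_A_alpha d k alpha) l ->
  l <= alpha * (INR d + 1) + 2 * (1 - alpha) * sqrt (INR d) * cos (PI / INR (k + 1)).
Proof.
  intros Hd Hk Ha Hl. assert (HD : 1 <= INR d) by (apply (le_INR 1); auto).
  set (q := sqrt (INR d)). assert (Hq : 0 < q) by (apply sqrt_lt_R0; lra).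
  assert (Hqq : q * q = INR d) by (apply sqrt_sqrt; lra).
  set (phi := PI / INR (k + 1)).
  assert (Hk1 : 0 < INR (k + 1)) by (apply lt_0_INR; lia).
  set (s := fun j : nat => sin (INR (S j) * phi) / q ^ j).
  assert (Hs : forall j, (j < k)%nat -> 0 < s j).
  { intros j Hj. unfold s. apply Rdiv_lt_0_compat; [|apply pow_lt; auto].
    apply sin_gt_0. unfold phi. apply Rmult_lt_0_compat. apply lt_0_INR; lia.
    apply Rdiv_lt_0_compat; auto. apply PI_RGT_0.
    unfold phi. apply Rmult_lt_reg_r with (INR (k + 1)); auto.
    replace (INR (S j) * (PI / INR (k + 1)) * INR (k + 1)) with (INR (S j) * PI) by (field; lra).
    pose proof PI_RGT_0. assert (INR (S j) < INR (k + 1)) by (apply lt_INR; lia). nra. }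
  apply (collatz (bethe_vertices d k) (bethe_A_alpha d k alpha) (fun v : list nat => s (length v)) _ l); auto.
  - intros; apply M_nonneg; lra.
  - intros u Hu. apply Hs. apply V_iff in Hu; tauto.
  - intros u Hu. rewrite M_sum by auto. apply V_iff in Hu. destruct Hu as [Hlu _].
    set (j := length u) in *.
    assert (E : (if Nat.eq_dec j 0 then 0 else s (pred j))
      + (if lt_dec (S j) k then INR d * s (S j) else 0) = 2 * q * cos phi * s j).
    { assert (E1 : (if Nat.eq_dec j 0 then 0 else s (pred j)) = sin (INR j * phi) * q / q ^ j).
      { destruct (Nat.eq_dec j 0) as [->|Hj]. simpl. rewrite Rmult_0_l, sin_0. field.
        destruct j as [|j']; [congruence|]. unfold s. simpl pred. simpl pow. field.
        split; [|lra]. apply pow_nonzero; lra. }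
      assert (E2 : (if lt_dec (S j) k then INR d * s (S j) else 0) = sin (INR (S (S j)) * phi) * q / q ^ j).
      { destruct (lt_dec (S j) k).
        - unfold s. rewrite <- Hqq. simpl pow. field. split; [apply pow_nonzero|]; lra.
        - replace (INR (S (S j)) * phi) with PI. rewrite sin_PI. unfold Rdiv; ring.
          unfold phi. replace (k + 1)%nat with (S (S j)) by lia. field.
          apply not_0_INR; lia. }
      rewrite E1, E2. unfold s.
      replace (INR j * phi) with (INR (S j) * phi - phi) by (rewrite S_INR; ring).
      replace (INR (S (S j)) * phi) with (INR (S j) * phi + phi) by (rewrite (S_INR (S j)); ring).
      replace (sin (INR (S j) * phi - phi) * q / q ^ j + sin (INR (S j) * phi + phi) * q / q ^ j)
        with ((sin (INR (S j) * phi - phi) + sin (INR (S j) * phi + phi)) * q / q ^ j)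
        by (field; apply pow_nonzero; lra).
      rewrite sin_sum_id. field. apply pow_nonzero; lra. }
    rewrite E. pose proof (degR_bounds d k j). pose proof (Hs j Hlu).
    assert (alpha * degR d k j * s j <= alpha * (INR d + 1) * s j).
    { apply Rmult_le_compat_r; [lra|]. apply Rmult_le_compat_l; lra. }
    fold q phi. nra.
Qed.

Lemma sumL_seqS (n : nat) (F : nat -> R) : sumL (seq 0 (S n)) F = sumL (seq 0 n) F + F n.
Proof. rewrite seq_S, sumL_app. simpl. unfold sumL; simpl. ring. Qed.

Lemma sumL_seq_shift (n : nat) (F : nat -> R) : sumL (seq 0 (S n)) F = F 0%nat + sumL (seq 0 n) (fun j => F (S j)).
Proof. simpl. rewrite <- seq_shift, sumL_map. reflexivity. Qed.

Lemma T1 t n : 2 * sin t * sumL (seq 0 n) (fun j => cos (2 * INR (S j) * t)) = sin ((2 * INR n + 1) * t) - sin t.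
Proof.
  induction n. simpl. unfold sumL; simpl. replace ((2*0+1)*t) with t by ring. ring.
  rewrite sumL_seqS, Rmult_plus_distr_l, IHn. rewrite !S_INR.
  replace ((2 * (INR n + 1) + 1) * t) with (2 * (INR n + 1) * t + t) by ring.
  replace ((2 * INR n + 1) * t) with (2 * (INR n + 1) * t - t) by ring.
  rewrite sin_plus, sin_minus. ring.
Qed.

Lemma T2 t n : 2 * sin t * sumL (seq 0 n) (fun j => cos ((2 * INR (S j) + 1) * t)) = sin ((2 * INR n + 2) * t) - sin (2 * t).
Proof.
  induction n. simpl. unfold sumL; simpl. replace ((2*0+2)*t) with (2 * t) by ring. ring.
  rewrite sumL_seqS, Rmult_plus_distr_l, IHn. rewrite !S_INR.
  replace ((2 * (INR n + 1) + 2) * t) with ((2 * (INR n + 1) + 1) * t + t) by ring.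
  replace ((2 * INR n + 2) * t) with ((2 * (INR n + 1) + 1) * t - t) by ring.
  rewrite sin_plus, sin_minus. ring.
Qed.

Section Trig.
Variable k : nat.
Hypothesis Hk : (2 <= k)%nat.
Let th := PI / INR k.
Let w j := sin (INR (S j) * th).

Lemma INRk_pos : 0 < INR k.
Proof. apply lt_0_INR; lia. Qed.

Lemma th_range : 0 < th < PI.
Proof.
  pose proof INRk_pos. pose proof PI_RGT_0. unfold th. split. apply Rdiv_lt_0_compat; auto.
  assert (2 <= INR k) by (apply (le_INR 2); auto).
  apply Rmult_lt_reg_r with (INR k); auto. replace (PI / INR k * INR k) with PI by (field; lra). nra.
Qed.

Lemma sin_th_pos : 0 < sin th.
Proof. destruct th_range. apply sin_gt_0; auto. Qed.

Lemma SW_sum : sumL (seq 0 k) (fun j => w j * w j) = INR k / 2.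
Proof.
  pose proof INRk_pos. pose proof sin_th_pos.
  assert (HC : sumL (seq 0 k) (fun j => cos (2 * INR (S j) * th)) = 0).
  { pose proof (T1 th k) as HT. replace ((2 * INR k + 1) * th) with (th + 2 * INR 1 * PI) in HT
      by (unfold th; simpl; field; lra).
    rewrite sin_period in HT. apply Rmult_eq_reg_l with (2 * sin th); [lra|lra]. }
  transitivity (sumL (seq 0 k) (fun j => 1 / 2 - / 2 * cos (2 * INR (S j) * th))).
  { apply sumL_ext; intros j _. unfold w. replace (2 * INR (S j) * th) with (2 * (INR (S j) * th)) by ring.
    rewrite cos_2a_sin. field. }
  unfold Rminus. rewrite sumL_plus, sumL_const, length_seq.
  rewrite (sumL_ext _ _ (fun j => -1 * (/ 2 * cos (2 * INR (S j) * th)))) by (intros; ring).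
  rewrite !sumL_scal, HC. field.
Qed.

Lemma SP_sum : sumL (seq 0 (pred k)) (fun j => w j * w (S j)) = INR k * cos th / 2.
Proof.
  pose proof INRk_pos. pose proof sin_th_pos.
  assert (Hk1 : INR (pred k) = INR k - 1).
  { destruct k; [lia|]. rewrite S_INR. simpl. ring. }
  assert (HC : sumL (seq 0 (pred k)) (fun j => cos ((2 * INR (S j) + 1) * th)) = - cos th).
  { pose proof (T2 th (pred k)) as HT. rewrite Hk1 in HT.
    replace ((2 * (INR k - 1) + 2) * th) with (2 * PI) in HT by (unfold th; field; lra).
    rewrite sin_2PI, sin_2a in HT. apply Rmult_eq_reg_l with (2 * sin th); [lra|lra]. }
  transitivity (sumL (seq 0 (pred k)) (fun j => / 2 * cos th - / 2 * cos ((2 * INR (S j) + 1) * th))).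
  { apply sumL_ext; intros j _. unfold w.
    replace ((2 * INR (S j) + 1) * th) with (INR (S j) * th + INR (S (S j)) * th) by (rewrite (S_INR (S j)); ring).
    assert (Hab : forall a b, sin a * sin b = / 2 * cos (b - a) - / 2 * cos (a + b)).
    { intros a b. rewrite cos_minus, cos_plus. field. }
    rewrite Hab. replace (INR (S (S j)) * th - INR (S j) * th) with th by (rewrite (S_INR (S j)); ring).
    reflexivity. }
  unfold Rminus. rewrite sumL_plus, sumL_const, length_seq.
  rewrite (sumL_ext _ _ (fun j => -1 * (/ 2 * cos ((2 * INR (S j) + 1) * th)))) by (intros; ring).
  rewrite !sumL_scal, HC, Hk1. field.
Qed.

End Trig.

Lemma PI_sq_le_10 : PI * PI <= 10.
Proof.
  destruct (PI_2_3_7_ineq 1) as [_ H].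
  unfold sum_f_R0, tg_alt, PI_2_3_7_tg, Ratan_seq in H. simpl in H.
  assert (PI <= 3.1422) by lra.
  assert (0 < PI) by apply PI_RGT_0. nra.
Qed.

Lemma amgm P Q b x y : 0 < P -> P * Q = b * b -> 2 * b * x * y <= P * x * x + Q * y * y.
Proof.
  intros HP HPQ. apply Rmult_le_reg_l with P; auto.
  assert (P * (P * x * x + Q * y * y) - P * (2 * b * x * y) = (P * x - b * y) * (P * x - b * y)).
  { replace (P * (P * x * x + Q * y * y)) with (P * P * x * x + (P * Q) * y * y) by ring.
    rewrite HPQ. ring. }
  pose proof (Rle_0_sqr (P * x - b * y)). unfold Rsqr in *. lra.
Qed.

Lemma lower_red d k alpha lam : (1 <= d)%nat -> (2 <= k)%nat -> 0 <= alpha < 1 ->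
  (forall j, (j < k)%nat -> 0 < ff d k alpha lam j) -> ff d k alpha lam k = 0 ->
  alpha * (INR d + 1) + 2 * (1 - alpha) * sqrt (INR d) * cos (PI / INR k)
  - 20 * alpha * sqrt (INR d) / (INR k ^ 3) < lam.
Proof.
  intros Hd Hk Ha Hpos Hz.
  assert (HD : 1 <= INR d) by (apply (le_INR 1); auto).
  set (q := sqrt (INR d)). assert (Hq : 0 < q) by (apply sqrt_lt_R0; lra).
  assert (Hqq : q * q = INR d) by (apply sqrt_sqrt; lra).
  assert (Hq1 : 1 <= q) by (unfold q; rewrite <- sqrt_1; apply sqrt_le_1_alt; lra).
  set (c := 1 - alpha). assert (Hc : 0 < c) by (unfold c; lra).
  set (th := PI / INR k).
  set (w := fun j : nat => sin (INR (S j) * th)).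
  set (f := ff d k alpha lam).
  set (fm := fun j => fst (fp d k alpha lam j)).
  assert (HkR : 0 < INR k) by (apply lt_0_INR; lia).
  destruct k as [|n]; [lia|].
  assert (Hwn : w n = 0).
  { unfold w, th. replace (INR (S n) * (PI / INR (S n))) with PI by (field; lra). apply sin_PI. }
  assert (Hfn : f (S n) = 0) by exact Hz.
  assert (Hpf : forall j, (j < S n)%nat -> 0 < f j) by exact Hpos. clear Hpos.
  assert (Hrel : forall j, (j < S n)%nat -> lam * (w j * w j) =
     Aj d (S n) alpha j * (w j * w j) + c * (fm j / f j) * (w j * w j) + c * INR d * (f (S j) / f j) * (w j * w j)).
  { intros j Hj. pose proof (rec_rel d (S n) alpha lam j Hd Ha) as R. fold c f in R. fold (fm j) in R.
    pose proof (Hpf j Hj).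
    replace (lam * (w j * w j)) with ((lam * f j) / f j * (w j * w j)) by (field; lra).
    rewrite <- R. field. lra. }
  assert (Hsum : lam * sumL (seq 0 (S n)) (fun j => w j * w j) =
     sumL (seq 0 (S n)) (fun j => Aj d (S n) alpha j * (w j * w j))
     + sumL (seq 0 (S n)) (fun j => c * (fm j / f j) * (w j * w j))
     + sumL (seq 0 (S n)) (fun j => c * INR d * (f (S j) / f j) * (w j * w j))).
  { rewrite <- sumL_scal, <- !sumL_plus. apply sumL_ext. intros j Hj. apply in_seq in Hj.
    apply Hrel; lia. }
  assert (HY : sumL (seq 0 (S n)) (fun j => c * (fm j / f j) * (w j * w j)) =
     sumL (seq 0 n) (fun j => c * (f j / f (S j)) * (w (S j) * w (S j)))).
  { rewrite sumL_seq_shift. unfold fm at 1; simpl fst. unfold Rdiv at 1. rewrite Rmult_0_l, Rmult_0_r, Rmult_0_l, Rplus_0_l.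
    apply sumL_ext; intros; reflexivity. }
  assert (HZ : sumL (seq 0 (S n)) (fun j => c * INR d * (f (S j) / f j) * (w j * w j)) =
     sumL (seq 0 n) (fun j => c * INR d * (f (S j) / f j) * (w j * w j))).
  { rewrite sumL_seqS, Hfn. unfold Rdiv. ring. }
  assert (Hn1 : (1 <= n)%nat) by lia.
  assert (HYZ : sumL (seq 0 n) (fun j => 2 * (c * q) * w j * w (S j)) <
     sumL (seq 0 n) (fun j => c * (f j / f (S j)) * (w (S j) * w (S j)))
     + sumL (seq 0 n) (fun j => c * INR d * (f (S j) / f j) * (w j * w j))).
  { rewrite <- sumL_plus. apply (sumL_lt _ _ _ (pred n)).
    - apply in_seq; lia.
    - replace (S (pred n)) with n by lia. rewrite Hwn.
      assert (0 < w (pred n)).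
      { pose proof (Hpf (pred n) ltac:(lia)). pose proof (Hpf n ltac:(lia)).
        unfold w. apply sin_gt_0.
        + apply Rmult_lt_0_compat. apply lt_0_INR; lia. unfold th; apply Rdiv_lt_0_compat; auto; apply PI_RGT_0.
        + unfold th. apply Rmult_lt_reg_r with (INR (S n)); auto.
          replace (INR (S (pred n)) * (PI / INR (S n)) * INR (S n)) with (INR (S (pred n)) * PI) by (field; lra).
          pose proof PI_RGT_0. assert (INR (S (pred n)) < INR (S n)) by (apply lt_INR; lia). nra. }
      pose proof (Hpf (pred n) ltac:(lia)). pose proof (Hpf n ltac:(lia)).
      replace (S (pred n)) with n in * by lia.
      assert (0 < c * INR d * (f n / f (pred n)) * (w (pred n) * w (pred n))).
      { apply Rmult_lt_0_compat. apply Rmult_lt_0_compat. nra. apply Rdiv_lt_0_compat; auto.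
        nra. }
      lra.
    - intros j Hj. apply in_seq in Hj. pose proof (Hpf j ltac:(lia)). pose proof (Hpf (S j) ltac:(lia)).
      pose proof (amgm (c * INR d * (f (S j) / f j)) (c * (f j / f (S j))) (c * q) (w j) (w (S j))) as AM.
      assert (0 < c * INR d * (f (S j) / f j)).
      { apply Rmult_lt_0_compat. nra. apply Rdiv_lt_0_compat; auto. }
      assert (c * INR d * (f (S j) / f j) * (c * (f j / f (S j))) = c * q * (c * q)).
      { rewrite <- Hqq. field. split; lra. }
      specialize (AM H1 H2). lra. }
  assert (HX : alpha * (INR d + 1) * sumL (seq 0 (S n)) (fun j => w j * w j) - alpha * (w 0%nat * w 0%nat)
     <= sumL (seq 0 (S n)) (fun j => Aj d (S n) alpha j * (w j * w j))).
  { assert (Hle : sumL (seq 0 (S n)) (fun j => alpha * (INR d + 1) * (w j * w j) + -1 * (if Nat.eq_dec j 0 then alpha * (w 0%nat * w 0%nat) else 0))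
       <= sumL (seq 0 (S n)) (fun j => Aj d (S n) alpha j * (w j * w j))).
    2:{ rewrite sumL_plus, !sumL_scal in Hle.
        rewrite (sumL_ind Nat.eq_dec (seq 0 (S n)) 0%nat) in Hle by (try apply seq_NoDup; apply in_seq; lia).
        lra. }
    apply sumL_le. intros j Hj. apply in_seq in Hj.
    unfold Aj, degR. pose proof (Rle_0_sqr (w j)). unfold Rsqr in H.
    destruct (lt_dec (S j) (S n)); destruct (Nat.eq_dec j 0) as [Hj0|Hj0]; try (subst j).
    all: try lia.
    all: try (replace j with n by lia; rewrite Hwn; lra).
    all: try nra. }
  pose proof (SW_sum (S n) Hk) as HSW. pose proof (SP_sum (S n) Hk) as HSP. fold th in HSW, HSP.
  fold w in HSW, HSP. simpl pred in HSP.
  rewrite (sumL_ext _ _ (fun j => 2 * (c * q) * (w j * w (S j)))) in HYZ by (intros; ring).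
  rewrite sumL_scal, HSP in HYZ.
  rewrite HY, HZ, HSW in Hsum. rewrite HSW in HX.
  assert (Hmain : lam * (INR (S n) / 2) > alpha * (INR d + 1) * (INR (S n) / 2) - alpha * (w 0%nat * w 0%nat)
     + 2 * (c * q) * (INR (S n) * cos th / 2)) by lra.
  assert (Hw0 : w 0%nat * w 0%nat <= PI * PI / (INR (S n) * INR (S n))).
  { unfold w. replace (INR 1 * th) with th by (simpl; ring).
    destruct (th_range (S n) Hk) as [T1 T2]. fold th in T1, T2.
    pose proof (sin_lt_x th T1). pose proof (sin_gt_0 th T1 T2).
    replace (PI * PI / (INR (S n) * INR (S n))) with (th * th) by (unfold th; field; lra). nra. }
  pose proof PI_sq_le_10.
  set (K := INR (S n)) in *.
  assert (Hdef : 2 * alpha * (w 0%nat * w 0%nat) / K <= 20 * alpha * q / K ^ 3).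
  { assert (alpha * (w 0%nat * w 0%nat) <= alpha * (10 / (K * K))).
    { apply Rmult_le_compat_l; [lra|]. eapply Rle_trans; [apply Hw0|].
      unfold Rdiv. apply Rmult_le_compat_r; auto. left; apply Rinv_0_lt_compat; nra. }
    assert (alpha * (10 / (K * K)) <= alpha * (10 * q / (K * K))).
    { apply Rmult_le_compat_l; [lra|]. unfold Rdiv. apply Rmult_le_compat_r. left; apply Rinv_0_lt_compat; nra. nra. }
    replace (20 * alpha * q / K ^ 3) with (2 * (alpha * (10 * q / (K * K))) / K) by (field; lra).
    unfold Rdiv. apply Rmult_le_compat_r. left; apply Rinv_0_lt_compat; lra. lra. }
  assert (Hlam : lam > alpha * (INR d + 1) + 2 * c * q * cos th - 2 * alpha * (w 0%nat * w 0%nat) / K).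
  { apply Rmult_gt_reg_l with (K / 2). lra.
    replace (K / 2 * (alpha * (INR d + 1) + 2 * c * q * cos th - 2 * alpha * (w 0%nat * w 0%nat) / K))
      with (alpha * (INR d + 1) * (K / 2) - alpha * (w 0%nat * w 0%nat) + 2 * (c * q) * (K * cos th / 2)) by (field; lra).
    lra. }
  unfold c, q, th in *. lra.
Qed.

Lemma alpha1_case d k : (1 <= d)%nat -> (2 <= k)%nat ->
  exists r : R,
    is_largest_eigenvalue (bethe_vertices d k) (bethe_A_alpha d k 1) r /\
    r <= 1 * (INR d + 1) + 2 * (1 - 1) * sqrt (INR d) * cos (PI / INR (k + 1)) /\
    1 * (INR d + 1) + 2 * (1 - 1) * sqrt (INR d) * cos (PI / INR k)
         - 20 * 1 * sqrt (INR d) / (INR k ^ 3) < r.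
Proof.
  intros Hd Hk. assert (HD : 1 <= INR d) by (apply (le_INR 1); auto).
  set (u0 := if lt_dec 2 k then [0%nat] else []).
  assert (Hu0 : In u0 (bethe_vertices d k)).
  { apply V_iff. unfold u0. destruct (lt_dec 2 k); split; simpl; try lia; repeat constructor; lia. }
  set (r := degR d k (length u0)).
  assert (Hr : forall j, (j < k)%nat -> degR d k j <= r).
  { intros j Hj. unfold r, u0, degR. destruct (lt_dec 2 k); simpl.
    - pose proof (pos_INR d). destruct (Nat.eq_dec j 0); destruct (lt_dec (S j) k); destruct (lt_dec 2 k); try lia; lra.
    - destruct (Nat.eq_dec j 0); destruct (lt_dec (S j) k); destruct (lt_dec 1 k); try lia; lra. }
  assert (Hsq : 1 <= sqrt (INR d)) by (rewrite <- sqrt_1; apply sqrt_le_1_alt; lra).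
  exists r. split; [split|].
  - exists (fun v => if list_eq_dec Nat.eq_dec v u0 then 1 else 0). split.
    + exists u0. split; auto. destruct (list_eq_dec Nat.eq_dec u0 u0); [lra|congruence].
    + intros u Hu. rewrite (sumL_ext _ _ (fun v => (if list_eq_dec Nat.eq_dec v u0 then 1 else 0) * bethe_A_alpha d k 1 u v)) by (intros; ring).
      rewrite ind_in by (auto; apply V_NoDup).
      unfold bethe_A_alpha, A_alpha, degMatrix.
      destruct (list_eq_dec Nat.eq_dec u u0) as [->|Hne].
      * rewrite degree_eq by auto. fold r. ring.
      * ring.
  - intros l Hl. apply (collatz (bethe_vertices d k) (bethe_A_alpha d k 1) (fun _ => 1) r l); auto.
    + intros; apply M_nonneg; lra.
    + intros; lra.
    + intros u Hu. pose proof (M_sum d k 1 u (fun _ => 1) Hu) as HM. cbv beta in HM. rewrite HM.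
      apply V_iff in Hu. pose proof (Hr (length u) ltac:(tauto)). lra.
  - split.
    + unfold r. pose proof (degR_bounds d k (length u0)). lra.
    + unfold r, u0, degR. destruct (lt_dec 2 k); cbn [length].
      * destruct (lt_dec 2 k); [|lia]. destruct (Nat.eq_dec 1 0); [lia|].
        assert (0 < INR k ^ 3) by (apply pow_lt, lt_0_INR; lia).
        assert (0 < 20 * 1 * sqrt (INR d) / INR k ^ 3) by (apply Rdiv_lt_0_compat; lra). lra.
      * replace k with 2%nat by lia. destruct (lt_dec 1 2); [|lia]. destruct (Nat.eq_dec 0 0); [|lia].
        simpl. lra.
Qed.

Theorem mainTheorem13 (d k : nat) (alpha : R) :
  (1 <= d)%nat -> (2 <= k)%nat -> 0 <= alpha <= 1 ->
  exists r : R,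
    is_largest_eigenvalue (bethe_vertices d k) (bethe_A_alpha d k alpha) r /\
    r <= alpha * (INR d + 1)
         + 2 * (1 - alpha) * sqrt (INR d) * cos (PI / INR (k + 1)) /\
    alpha * (INR d + 1)
         + 2 * (1 - alpha) * sqrt (INR d) * cos (PI / INR k)
         - 20 * alpha * sqrt (INR d) / (INR k ^ 3) < r.
Proof.
  intros Hd Hk Ha.
  destruct (Req_dec alpha 1) as [->|Hne].
  - apply alpha1_case; auto.
  - assert (Ha' : 0 <= alpha < 1) by lra.
    destruct (perron d k alpha Hd Hk Ha') as [lam [Hpos Hz]].
    pose proof (largest_tree d k alpha lam Hd Hk Ha' Hpos Hz) as HL.
    exists lam. split; [auto|]. split.
    + apply upper_tree; auto. apply HL.
    + apply lower_red; auto.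
Qed.
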